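(* The parameterized problems \textsc{Cluster Editing}[cvd] and \textsc{Cluster Editing}[ce] do not admit a boundaried kernelization (of any computable size $f$).
   Context: A boundaried graph $G_B$ is a finite simple graph $G$ together with a set $B\subseteq V(G)$ (the boundary). For boundaried graphs $G_B$ and $H_C$ with $V(G)\cap V(H)\subseteq B\cap C$, the gluing $G_B\oplus H_C$ is the simple graph obtained from the disjoint union of $G$ and $H$ by identifying each vertex of $B\cap C$ in $G$ with the identically named vertex in $H$ (an edge present in both is kept once). For an isomorphism-invariant optimization problem $\Pi$ on graphs with optimum value $\mathrm{OPT}_\Pi(G)$, two $B$-boundaried graphs $G_B,G'_B$ are gluing equivalent w.r.t. $\Pi$ and $B$, written $G_B\equiv_{\Pi,B}G'_B$, if there is $\Delta\in\mathbb{Z}$ with $\mathrm{OPT}_\Pi(G_B\oplus H_B)=\mathrm{OPT}_\Pi(G'_B\oplus H_B)+\Delta$ for every boundaried graph $H_B$. For a pure graph minimization problem $\rho$, a $\rho$-solution of $G$ is a feasible solution $s$ with value $\rho(G,s)$. For computable $f$, a boundaried kernelization of size $f$ for $\Pi[\rho]$ is a polynomial-time algorithm that, given a boundaried graph $G_B$ and a $\rho$-solution $s$ of $G$, outputs a boundaried graph $G'_B$ with $G_B\equiv_{\Pi,B}G'_B$, a $\rho$-solution $s'$ of $G'$ with $|G'|,|s'|,\rho(G',s')\le f(|B|+\rho(G,s))$ (encoding sizes), and an integer $\Delta$ with $\mathrm{OPT}_\Pi(G_B\oplus H_B)=\mathrm{OPT}_\Pi(G'_B\oplus H_B)+\Delta$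 for all $H_B$. A cluster graph is a disjoint union of cliques. \textsc{Cluster Editing} (ce) is the minimization problem whose feasible solutions on $G$ are sets $E$ of vertex pairs such that the graph with edge set $E(G)\triangle E$ is a cluster graph, with value $|E|$. \textsc{Cluster Vertex Deletion} (cvd) is the minimization problem whose feasible solutions are $S\subseteq V(G)$ with $G-S$ a cluster graph, value $|S|$. $\Pi$[cvd], $\Pi$[ce] denote $\rho=$ cvd, resp. $\rho=$ ce, with $\Pi=$ \textsc{Cluster Editing}. *)

(* Defs.v *)
From HB Require Import structures.
From mathcomp Require Import all_boot all_order all_algebra.
From mathcomp Require Import finmap.
Set Implicit Arguments. Unset Strict Implicit. Unset Printing Implicit Defensive.
Import GRing.Theory.
Local Open Scope fset_scope.

Record graph := Graph { vs : {fset nat}; adj : rel nat }.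

Definition wf_graph (G : graph) : Prop :=
  [/\ (forall u v, adj G u v -> (u \in vs G) && (v \in vs G)),
      (forall u v, adj G u v = adj G v u) &
      (forall u, ~~ adj G u u)].

Definition bgraph_wf (G : graph) (B : {fset nat}) : Prop :=
  wf_graph G /\ B `<=` vs G.

Definition is_cluster (V : {fset nat}) (e : rel nat) : Prop :=
  exists c : nat -> nat,
    forall x y, x \in V -> y \in V -> x != y -> e x y = (c x == c y).

Definition cvd_feasible (G : graph) (S : {fset nat}) : Prop :=
  S `<=` vs G /\ is_cluster (vs G `\` S) (adj G).
Definition cvd_value (G : graph) (S : {fset nat}) : nat := #|` S|.

(* Cluster Editing: a set of unordered vertex pairs, each stored as (u,v)
   with u < v; the edited graph has edge set E(G) symmetric-difference E. *)
Definition ce_feasible (G : graph) (E : {fset (nat * nat)}) : Prop :=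
  (forall p, p \in E -> [&& p.1 < p.2, p.1 \in vs G & p.2 \in vs G]) /\
  is_cluster (vs G) (fun x y => addb (adj G x y) ((minn x y, maxn x y) \in E)).
Definition ce_value (G : graph) (E : {fset (nat * nat)}) : nat := #|` E|.

Definition is_opt (S : Type) (feas : graph -> S -> Prop) (val : graph -> S -> nat)
  (G : graph) (k : nat) : Prop :=
  (exists s, feas G s /\ val G s = k) /\ (forall s, feas G s -> k <= val G s).

Definition opt_ce (G : graph) (k : nat) : Prop := is_opt ce_feasible ce_value G k.

(* Gluing G_B (+) H_C: disjoint union of G and H with the vertices of B :&: C
   identified.  To keep the union disjoint, vertex names are re-encoded:
   a shared vertex b becomes 3b, a private vertex v of G becomes 3v+1, a
   private vertex v of H becomes 3v+2. *)
Definition decode (tag : nat) (BC : {fset nat}) (x : nat) : option nat :=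
  if x %% 3 == 0 then (if x %/ 3 \in BC then Some (x %/ 3) else None)
  else if x %% 3 == tag then (if x %/ 3 \notin BC then Some (x %/ 3) else None)
  else None.

Definition lift_adj (e : rel nat) (tag : nat) (BC : {fset nat}) : rel nat :=
  fun x y => match decode tag BC x, decode tag BC y with
             | Some u, Some v => e u v
             | _, _ => false
             end.

Definition glue (G : graph) (B : {fset nat}) (H : graph) (C : {fset nat}) : graph :=
  let BC := B `&` C in
  Graph ([fset (3 * b)%N | b in BC]
           `|` [fset (3 * v + 1)%N | v in vs G `\` BC]
           `|` [fset (3 * v + 2)%N | v in vs H `\` BC])
        (fun x y => lift_adj (adj G) 1 BC x y || lift_adj (adj H) 2 BC x y).

(* Sizes: number of vertices of G' and value of s'
   (for both cvd and ce, |s'| equals rho(G', s')). *)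
Definition boundaried_kernelization (S : Type) (feas : graph -> S -> Prop)
  (val : graph -> S -> nat) (f : nat -> nat)
  (K : graph -> {fset nat} -> S -> graph * S * int) : Prop :=
  forall (G : graph) (B : {fset nat}) (s : S),
    bgraph_wf G B -> feas G s ->
    let G' := (K G B s).1.1 in
    let s' := (K G B s).1.2 in
    let D := (K G B s).2 in
    [/\ bgraph_wf G' B, feas G' s',
        #|` vs G'| <= f (addn #|` B| (val G s)),
        val G' s' <= f (addn #|` B| (val G s)) &
        forall H : graph, bgraph_wf H B ->
          forall k k', opt_ce (glue G B H B) k -> opt_ce (glue G' B H B) k' ->
            (Posz k = Posz k' + D)%R].

(* Main.v *)
Require Import Defs.
From mathcomp Require Import all_boot all_order all_algebra.
From mathcomp Require Import finmap zify.
From Stdlib Require Import Classical.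
Set Implicit Arguments. Unset Strict Implicit.
Local Open Scope fset_scope.
Local Open Scope nat_scope.

Lemma mod3a u : (3 * u) %% 3 = 0. Proof. lia. Qed.
Lemma div3a u : (3 * u) %/ 3 = u. Proof. lia. Qed.
Lemma mod3b u t : t < 3 -> (3 * u + t) %% 3 = t. Proof. lia. Qed.
Lemma div3b u t : t < 3 -> (3 * u + t) %/ 3 = u. Proof. lia. Qed.

Lemma dec0 t BC u : decode t BC (3 * u) = if u \in BC then Some u else None.
Proof. by rewrite /decode mod3a div3a. Qed.
Lemma decT t BC u : 0 < t < 3 -> decode t BC (3 * u + t) = if u \notin BC then Some u else None.
Proof.
move=> /andP[t0 t3]; rewrite /decode mod3b // div3b // eqxx.
by case: t t0 t3.
Qed.
Lemma decN t t' BC u : 0 < t' < 3 -> t != t' -> decode t BC (3 * u + t') = None.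
Proof.
move=> /andP[t0 t3] ne; rewrite /decode mod3b //.
case: t' t0 t3 ne => //= t' _ _ ne. by rewrite eq_sym (negbTE ne).
Qed.
Lemma decS t BC x u : 0 < t < 3 -> decode t BC x = Some u ->
  (x = (3 * u)%N /\ u \in BC) \/ (x = (3 * u + t)%N /\ u \notin BC).
Proof.
move=> /andP[t0 t3]; rewrite /decode.
case: ifP => [/eqP m0|m0].
  case: ifP => // hb [<-]; left; split => //; lia.
case: ifP => [/eqP mt|//]; case: ifP => // hb [<-]; right; split => //; lia.
Qed.
Lemma decI t BC x y u : 0 < t < 3 -> decode t BC x = Some u -> decode t BC y = Some u -> x = y.
Proof.
move=> ht hx hy; case: (decS ht hx) => -[-> hu]; case: (decS ht hy) => -[-> hu'] //.
  by rewrite hu in hu'. by rewrite hu' in hu.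
Qed.

Lemma in_glueP G B H x : x \in vs (glue G B H B) ->
  [\/ exists2 b, b \in B `&` B & x = (3 * b)%N,
      exists2 v, v \in vs G `\` (B `&` B) & x = (3 * v + 1)%N |
      exists2 v, v \in vs H `\` (B `&` B) & x = (3 * v + 2)%N].
Proof.
rewrite /glue /= !in_fsetU => /orP[/orP[]|] /imfsetP[v hv ->].
- by constructor 1; exists v.
- by constructor 2; exists v.
- by constructor 3; exists v.
Qed.
Lemma in_glue0 G B H b : b \in B `&` B -> (3 * b)%N \in vs (glue G B H B).
Proof. by move=> hb; rewrite /glue /= !in_fsetU in_imfset. Qed.
Lemma in_glue1 G B H v : v \in vs G `\` (B `&` B) -> (3 * v + 1)%N \in vs (glue G B H B).
Proof. by move=> hb; rewrite /glue /= !in_fsetU (in_imfset _ (fun v => 3 * v + 1)%N) ?orbT. Qed.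
Lemma in_glue2 G B H v : v \in vs H `\` (B `&` B) -> (3 * v + 2)%N \in vs (glue G B H B).
Proof. by move=> hb; rewrite /glue /= !in_fsetU (in_imfset _ (fun v => 3 * v + 2)%N) ?orbT. Qed.

Lemma sz_enum (K : choiceType) (W : {fset K}) : size (enum_finmem (mem W)) = #|` W|.
Proof.
have := @card_imfset imfset_key K K id (mem W) (fun x y (h : id x = id y) => h).
move=> <-; congr #|` _|; apply/fsetP=> x; rewrite in_fset //.
Qed.
Lemma card2 (W : {fset nat}) : (#|` [fset ((x, y) : nat * nat) | x in W, y in W]| <= #|` W| * #|` W|)%N.
Proof.
rewrite unlock /= size_seq_fset (leq_trans (size_undup _)) //.
by rewrite size_allpairs sz_enum.
Qed.
Lemma in_pairs (W : {fset nat}) x y : x \in W -> y \in W ->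
  (x, y) \in [fset ((x, y) : nat * nat) | x in W, y in W].
Proof. by move=> hx hy; apply/imfset2P; exists x => //; exists y. Qed.

Lemma feas_exists X : (forall x y, adj X x y = adj X y x) -> exists E, ce_feasible X E.
Proof.
move=> sym.
set P := [fset ((x, y) : nat * nat) | x in vs X, y in vs X].
exists [fset p in P | (p.1 < p.2) && adj X p.1 p.2]; split.
  move=> p; rewrite in_fset /= => /andP[/imfset2P[x hx [y hy ->]]] /= /andP[-> _].
  by rewrite hx hy.
exists id => x y hx hy nxy /=.
case: (ltngtP x y) => h; last by rewrite h eqxx in nxy.
- by rewrite !inE /= hx hy h /= addbb.
- by rewrite !inE /= hx hy h /= sym addbb.
Qed.

Lemma opt_exists X : (exists E, ce_feasible X E) -> exists k, opt_ce X k.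
Proof.
move=> [E0 hE0].
suff: forall m k0, k0 <= m -> (exists E, ce_feasible X E /\ ce_value X E = k0) -> exists k, opt_ce X k.
  by move=> /(_ (ce_value X E0) (ce_value X E0) (leqnn _)); apply; exists E0.
elim=> [|m IH] k0 hk [E [hE hv]].
- exists k0; split; first by exists E.
  move: hk; rewrite leqn0 => /eqP -> s _; done.
- case: (classic (forall s, ce_feasible X s -> k0 <= ce_value X s)) => h.
    by exists k0; split => //; exists E.
  have [s hs] := not_all_ex_not _ _ h.
  apply: (IH (ce_value X s)); last by exists s; split => //; tauto.
  have : ~ (k0 <= ce_value X s) by tauto.
  move/negP; rewrite -ltnNge => h'; lia.
Qed.

Definition vsn (n : nat) : {fset nat} := [fset x | x in iota 0 n].
Lemma in_vsn n x : (x \in vsn n) = (x < n)%N.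
Proof. by rewrite /vsn in_fset /= mem_iota add0n. Qed.
Definition Kn (n : nat) : graph := Graph (vsn n) (fun x y => [&& x != y, x < n & y < n]).
Definition B0 : {fset nat} := [fset 0%N].

Lemma wf_Kn n : wf_graph (Kn n).
Proof.
split => [u v|u v|u] /=; rewrite ?in_vsn.
- by case/and3P => _ -> ->.
- by rewrite eq_sym; case: (u < n); case: (v < n); rewrite ?andbF.
- by rewrite eqxx.
Qed.
Lemma bwf_Kn n : 0 < n -> bgraph_wf (Kn n) B0.
Proof.
move=> n0; split; first exact: wf_Kn.
by apply/fsubsetP => x; rewrite in_fset1 /= in_vsn => /eqP ->.
Qed.
Lemma cl_Kn n : is_cluster (vs (Kn n)) (adj (Kn n)).
Proof. by exists (fun _ => 0%N) => x y /=; rewrite !in_vsn => -> -> ->. Qed.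

Lemma lift_sym e t BC x y : (forall u v, e u v = e v u) ->
  lift_adj e t BC x y = lift_adj e t BC y x.
Proof.
move=> sym; rewrite /lift_adj.
by case: (decode t BC x) => [u|]; case: (decode t BC y) => [v|].
Qed.
Lemma glue_sym G B H x y : wf_graph G -> wf_graph H ->
  adj (glue G B H B) x y = adj (glue G B H B) y x.
Proof.
case=> _ sG _ [_ sH _] /=.
by rewrite (lift_sym _ _ _ _ sG) (lift_sym _ _ _ _ sH).
Qed.

Lemma B0I : B0 `&` B0 = B0. Proof. exact: fsetIid. Qed.

Lemma lower n E : ce_feasible (glue (Kn n) B0 (Kn n) B0) E -> (n.-1 <= #|` E|)%N.
Proof.
case=> _ [c hc].
have key : forall i, 0 < i < n -> exists2 p, p \in E & (p.2 %/ 3)%N = i.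
  move=> i /andP[i0 iN].
  have i0' : i != 0 by rewrite -lt0n.
  have n0 : 0 < n by lia.
  have hi : i \notin B0 `&` B0 by rewrite B0I in_fset1 -lt0n.
  have h0 : 0%N \in B0 `&` B0 by rewrite B0I in_fset1.
  have vi : i \in vs (Kn n) `\` (B0 `&` B0) by rewrite in_fsetD hi /= in_vsn.
  have vx := @in_glue1 (Kn n) B0 (Kn n) i vi.
  have vz := @in_glue2 (Kn n) B0 (Kn n) i vi.
  have vy := @in_glue0 (Kn n) B0 (Kn n) 0 h0.
  rewrite muln0 in vy.
  have d1 : decode 1 (B0 `&` B0) (3 * i + 1) = Some i by rewrite decT // hi.
  have d2 : decode 2 (B0 `&` B0) (3 * i + 2) = Some i by rewrite decT // hi.
  have d1' : decode 1 (B0 `&` B0) (3 * i + 2) = None by rewrite decN.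
  have d2' : decode 2 (B0 `&` B0) (3 * i + 1) = None by rewrite decN.
  have e0 : forall t, decode t (B0 `&` B0) 0 = Some 0%N.
    by move=> t; have := dec0 t (B0 `&` B0) 0; rewrite muln0 h0.
  have a1 : adj (glue (Kn n) B0 (Kn n) B0) (3 * i + 1) 0 = true.
    by rewrite /= /lift_adj d1 e0 /= i0' iN n0.
  have a2 : adj (glue (Kn n) B0 (Kn n) B0) 0 (3 * i + 2) = true.
    by rewrite /= /lift_adj d2 d1' !e0 /= eq_sym i0' iN n0.
  have a3 : adj (glue (Kn n) B0 (Kn n) B0) (3 * i + 1) (3 * i + 2) = false.
    by rewrite /= /lift_adj d1' d2' d1.
  case E1: ((0%N, (3 * i + 1)%N) \in E).
    by exists (0%N, (3 * i + 1)%N) => //=; rewrite div3b.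
  case E2: ((0%N, (3 * i + 2)%N) \in E).
    by exists (0%N, (3 * i + 2)%N) => //=; rewrite div3b.
  case E3: (((3 * i + 1)%N, (3 * i + 2)%N) \in E).
    by exists ((3 * i + 1)%N, (3 * i + 2)%N) => //=; rewrite div3b.
  have h1 := hc _ _ vx vy ltac:(by rewrite addn1).
  have h2 := hc _ _ vy vz ltac:(by rewrite addn2).
  have h3 := hc _ _ vx vz ltac:(by rewrite eqn_add2l).
  rewrite a1 minn0 maxn0 E1 /= in h1.
  rewrite a2 min0n max0n E2 /= in h2.
  have m1 : minn (3 * i + 1) (3 * i + 2) = (3 * i + 1)%N by apply/minn_idPl; rewrite leq_add2l.
  have m2 : maxn (3 * i + 1) (3 * i + 2) = (3 * i + 2)%N by apply/maxn_idPr; rewrite leq_add2l.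
  rewrite m1 m2 a3 E3 /= in h3.
  by move: h1 h2 h3 => /esym/eqP -> /esym/eqP ->; rewrite eqxx.
have sub : [fset x in iota 1 n.-1] `<=` [fset p.2 %/ 3 | p in E]%N.
  apply/fsubsetP => i; rewrite in_fset /= mem_iota => /andP[i0 iN].
  have [p hp <-] := key i ltac:(apply/andP; split => //; lia).
  by apply/imfsetP; exists p.
have := fsubset_leq_card sub.
rewrite card_fseq undup_id ?iota_uniq // size_iota => h.
apply: (leq_trans h); rewrite (leq_trans (leq_imfset_card _ _ _)) // sz_enum.
Qed.

Lemma opt_K1 n : 0 < n -> opt_ce (glue (Kn n) B0 (Kn 1) B0) 0.
Proof.
move=> n0.
have hdec : forall x, x \in vs (glue (Kn n) B0 (Kn 1) B0) ->
    exists2 u, decode 1 (B0 `&` B0) x = Some u & u < n.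
  move=> x /in_glueP[] [v hv ->].
  - by exists v; rewrite ?dec0 ?hv //; move: hv; rewrite B0I in_fset1 => /eqP ->.
  - move: hv; rewrite in_fsetD /= in_vsn => /andP[hv vn].
    by exists v; rewrite ?decT ?hv.
  - by move: hv; rewrite in_fsetD /= in_vsn B0I in_fset1 ltnS leqn0 => /andP[/negbTE ->].
split; last by [].
exists fset0; split => //; split => //.
exists (fun _ => 0) => x y hx hy nxy.
rewrite in_fset0 addbF eqxx /=.
have [u hu un] := hdec x hx; have [v hv vn] := hdec y hy.
have uv : u != v.
  apply/eqP => e; move: nxy; rewrite e in hu.
  by rewrite (decI _ hu hv) ?eqxx.
by rewrite /lift_adj hu hv un vn uv.
Qed.

Lemma upper G0 H0 B : wf_graph G0 -> wf_graph H0 -> B `<=` vs H0 ->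
  is_cluster (vs H0) (adj H0) ->
  exists E, ce_feasible (glue G0 B H0 B) E /\ #|` E| <= #|` vs G0| * #|` vs G0|.
Proof.
move=> wG wH sBH [c hcH].
set X := glue G0 B H0 B.
set BC := B `&` B.
set lG := lift_adj (adj G0) 1 BC.
set lH := lift_adj (adj H0) 2 BC.
have eX : forall x y, adj X x y = lG x y || lH x y by [].
have symG : forall x y, lG x y = lG y x.
  by move=> x y; apply: lift_sym; case: wG.
have symH : forall x y, lH x y = lH y x.
  by move=> x y; apply: lift_sym; case: wH.
have symX : forall x y, adj X x y = adj X y x by move=> x y; rewrite !eX symG symH.
set P := [fset ((x, y) : nat * nat) | x in vs X, y in vs X].
set E := [fset p in P | (p.1 < p.2) && adj X p.1 p.2 && ~~ lH p.1 p.2].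
have memE : forall x y, x \in vs X -> y \in vs X ->
    ((x, y) \in E) = [&& x < y, adj X x y & ~~ lH x y].
  move=> x y hx hy; have hP : (x, y) \in P by exact: in_pairs.
  rewrite /E in_fset inE /= [X in [&& X, _ & _]](_ : _ = true) ?andbA //; exact: hP.
have hdec2 : forall x u, x \in vs X -> decode 2 BC x = Some u -> u \in vs H0.
  move=> x u hx /(decS (isT : 0 < 2 < 3)) [[ex hu]|[ex hu]].
    by apply: (fsubsetP sBH); move: hu; rewrite in_fsetI => /andP[].
  case/in_glueP: hx => -[v hv ev]; rewrite ex in ev; try lia.
  have -> : u = v by lia.
  by move: hv; rewrite in_fsetD => /andP[].
exists E; split.
  split.
    move=> p; rewrite in_fset /= => /andP[/imfset2P[x hx [y hy ->]]] /= /andP[/andP[-> _] _].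
    by rewrite hx hy.
  exists (fun x => if decode 2 BC x is Some u then 2 * c u else 2 * x + 1).
  move=> x y hx hy nxy.
  have -> : adj X x y (+) ((minn x y, maxn x y) \in E) = lH x y.
    case: (ltngtP x y) => h; last by rewrite h eqxx in nxy.
    - rewrite memE // h andTb eX.
      by move: (lG x y) (lH x y) => [] [].
    - rewrite memE // h andTb symX eX (symH y x).
      by move: (lG y x) (lH x y) => [] [].
  rewrite /lH /lift_adj.
  case ex: (decode 2 BC x) => [u|]; case ey: (decode 2 BC y) => [v|].
  - have uv : u != v.
      apply/eqP => e; move: nxy; rewrite e in ex.
      by rewrite (decI _ ex ey) ?eqxx.
    by rewrite (hcH u v (hdec2 _ _ hx ex) (hdec2 _ _ hy ey) uv) eqn_pmul2l.
  - by apply/esym/eqP; lia.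
  - by apply/esym/eqP; lia.
  - by apply/esym/eqP => e; move/eqP: nxy; apply; lia.
set W := [fset (if v \in BC then 3 * v else 3 * v + 1) | v in vs G0].
have cW : #|` W| <= #|` vs G0|.
  by rewrite (leq_trans (leq_imfset_card _ _ _)) // sz_enum.
have inW : forall x y, lG x y -> x \in W.
  move=> x y; rewrite /lG /lift_adj.
  case ex: (decode 1 BC x) => [u|] //; case: (decode 1 BC y) => [v|] // huv.
  have hu : u \in vs G0 by case: wG => h _ _; case/andP: (h _ _ huv).
  apply/imfsetP; exists u => //.
  by case: (decS (isT : 0 < 1 < 3) ex) => -[-> hb]; rewrite ?hb // (negbTE hb).
have sEW : E `<=` [fset ((x, y) : nat * nat) | x in W, y in W].
  apply/fsubsetP => -[x y] hp.
  move: hp; rewrite /E in_fset inE /= => /and3P[_ /andP[_ hg'] hl].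
  have hg : lG x y by move: hg' hl; rewrite -/BC -/lG -/lH; case: (lG x y); case: (lH x y).
  apply: in_pairs; first exact: (inW _ _ hg).
  by rewrite symG in hg; exact: (inW _ _ hg).
apply: (leq_trans (fsubset_leq_card sEW)); apply: (leq_trans (card2 W)).
exact: leq_mul.
Qed.

Lemma core n G' (D : int) : 0 < n -> wf_graph G' -> B0 `<=` vs G' ->
  (forall H, bgraph_wf H B0 -> forall k k', opt_ce (glue (Kn n) B0 H B0) k ->
     opt_ce (glue G' B0 H B0) k' -> Posz k = (Posz k' + D)%R) ->
  n.-1 <= #|` vs G'| * #|` vs G'|.
Proof.
move=> n0 wG sB hD.
have [k1' o1'] : exists k, opt_ce (glue G' B0 (Kn 1) B0) k.
  by apply: opt_exists; apply: feas_exists => x y; apply: glue_sym => //; exact: wf_Kn.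
have e1 := hD (Kn 1) (bwf_Kn (isT : 0 < 1)) 0 k1' (opt_K1 n0) o1'.
have [_ sBn] := bwf_Kn n0.
have [E2 [fE2 cE2]] := upper wG (wf_Kn n) sBn (cl_Kn n).
have [k2' o2'] := opt_exists (ex_intro _ E2 fE2).
have [k2 o2] : exists k, opt_ce (glue (Kn n) B0 (Kn n) B0) k.
  by apply: opt_exists; apply: feas_exists => x y; apply: glue_sym => //; exact: wf_Kn.
have e2 := hD (Kn n) (bwf_Kn n0) k2 k2' o2 o2'.
have l2 : n.-1 <= k2 by case: o2 => [[E [hE <-]] _]; exact: lower hE.
have u2 : k2' <= #|` E2| by case: o2' => _ h; exact: h _ fE2.
have : k2 <= k2' by lia.
lia.
Qed.

Lemma cvd_Kn n : cvd_feasible (Kn n) fset0.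
Proof.
split; first exact: fsub0set.
exists (fun _ => 0) => x y; rewrite !in_fsetD /= !in_vsn => -> -> ->; done.
Qed.
Lemma ce_Kn n : ce_feasible (Kn n) fset0.
Proof.
split => //; exists (fun _ => 0) => x y; rewrite in_fset0 addbF /= !in_vsn => -> -> ->; done.
Qed.

Theorem mainTheorem10 :
  (~ exists (f : nat -> nat)
        (K : graph -> {fset nat} -> {fset nat} -> graph * {fset nat} * int),
        boundaried_kernelization cvd_feasible cvd_value f K) /\
  (~ exists (f : nat -> nat)
        (K : graph -> {fset nat} -> {fset (nat * nat)} -> graph * {fset (nat * nat)} * int),
        boundaried_kernelization ce_feasible ce_value f K).
Proof.
split.
- move=> [f [K hK]].
  pose n := f 1 * f 1 + 2.
  have n0 : 0 < n by rewrite /n addn2.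
  have := hK (Kn n) B0 fset0 (bwf_Kn n0) (cvd_Kn n).
  move=> /= [[wG' sB'] _ hs _ hg].
  have := core n0 wG' sB' hg.
  rewrite /cvd_value cardfs1 cardfs0 in hs.
  have := leq_mul hs hs.
  rewrite /n addn0 => h1 h2; move: (leq_trans h2 h1); set m := f 1 * f 1; lia.
- move=> [f [K hK]].
  pose n := f 1 * f 1 + 2.
  have n0 : 0 < n by rewrite /n addn2.
  have := hK (Kn n) B0 fset0 (bwf_Kn n0) (ce_Kn n).
  move=> /= [[wG' sB'] _ hs _ hg].
  have := core n0 wG' sB' hg.
  rewrite /ce_value cardfs1 cardfs0 in hs.
  have := leq_mul hs hs.
  rewrite /n addn0 => h1 h2; move: (leq_trans h2 h1); set m := f 1 * f 1; lia.
Qed.
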